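(* Let $g=\delta_{\{0\}}$ on $c_c$ (so $g^*\equiv 0$ on $\ell^2$). Then the primal problem $\inf_{x\in c_c}\left(f(x)+g(x)\right)$ has value $f(0)=\pi^2/12$, and the Fenchel dual problem $\sup_{y\in\ell^2}\left(-f^*(y)-g^*(-y)\right)=\sup_{y\in\ell^2}\left(-f^*(y)\right)$ also has value $\pi^2/12$ (no duality gap), but the dual supremum is not attained by any $y\in\ell^2$.
   Context: Let $c_c$ be the space of finitely supported real sequences with the $\ell^2$-norm; its dual is identified with $\ell^2$ via $\langle y,x\rangle=\sum_n y_nx_n$. Let $f\colon c_c\to\mathbb{R}$, $f(x)=\sum_{n=1}^\infty \frac{n^2}{2}(x_n-n^{-2})^2$. For $h\colon c_c\to(-\infty,\infty]$, $h^*(y)=\sup_{x\in c_c}(\langle y,x\rangle-h(x))$ for $y\in\ell^2$. $\delta_{\{0\}}$ denotes the indicator function of $\{0\}$ (value $0$ at $0$ and $+\infty$ elsewhere). *)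

(* Defs.v *)
From HB Require Import structures.
From mathcomp Require Import all_boot all_order all_algebra.
From mathcomp Require Import all_classical all_reals all_analysis.
Set Implicit Arguments. Unset Strict Implicit. Unset Printing Implicit Defensive.
Import Order.TTheory GRing.Theory Num.Theory.
Import numFieldNormedType.Exports.
Local Open Scope classical_set_scope.
Local Open Scope ring_scope.

(* Convention: a real sequence (x_n)_{n>=1} is represented by x : nat -> R
   with x k standing for x_{k+1}. *)

Section Defs.
Variable R : realType.

Definition cc : set (nat -> R) :=
  [set x | exists N : nat, forall k : nat, (N <= k)%N -> x k = 0].

Definition l2 : set (nat -> R) :=
  [set y | (\sum_(0 <= k <oo) ((y k ^+ 2)%:E) < +oo)%E].

Definition pairing (y x : nat -> R) : R :=
  limn (series (fun k => y k * x k)).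

Definition fobj (x : nat -> R) : \bar R :=
  (\sum_(0 <= k <oo)
     ((((k.+1)%:R ^+ 2) / 2 * (x k - ((k.+1)%:R ^+ 2)^-1) ^+ 2)%:E))%E.

Definition gind (x : nat -> R) : \bar R :=
  if `[< x = (fun _ => 0) >] then 0%E else (+oo)%E.

Definition fconj (h : (nat -> R) -> \bar R) (y : nat -> R) : \bar R :=
  ereal_sup [set ((pairing y x)%:E - h x)%E | x in cc].

End Defs.

(* Main.v *)
Require Import Defs.
From HB Require Import structures.
From mathcomp Require Import all_boot all_order all_algebra.
From mathcomp Require Import all_classical all_reals all_analysis.
From mathcomp Require Import lra ring zify.
Import Order.TTheory GRing.Theory Num.Theory.
Import numFieldNormedType.Exports.
Local Open Scope classical_set_scope.
Local Open Scope ring_scope.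

Section Trig.
Context {R : realType}.

Lemma sin_le_x (x : R) : 0 <= x -> sin x <= x.
Proof.
move=> x0.
have [c _ h] := @MVT_segment R sin cos 0 x x0 (fun y _ => is_derive_sin y)
  (continuous_subspaceT (@continuous_sin R)).
move: h; rewrite sin0 subr0 subr0 => ->.
by rewrite ler_piMl // cos_le1.
Qed.

Lemma x_cos_le_sin (x : R) : 0 <= x < pi / 2 -> x * cos x <= sin x.
Proof.
move=> /andP[x0 xp].
have cpos y : 0 <= y <= x -> 0 < cos y.
  move=> /andP[y0 yx]; apply: cos_gt0_pihalf; apply/andP; split.
    by apply: (lt_le_trans _ y0); rewrite oppr_lt0 divr_gt0 // pi_gt0.
  exact: (le_lt_trans yx).
have cx0 : forall y, 0 <= y <= x -> cos y != 0 by move=> y hy; exact: lt0r_neq0 (cpos y hy).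
have hd : forall y, y \in `]0, x[ -> is_derive y 1 (@tan R) ((cos y)^-2).
  move=> y; rewrite in_itv /= => /andP[y0 yx]; apply: is_derive_tan; apply: cx0.
  by rewrite !ltW.
have hc : {within `[0, x], continuous (@tan R)}.
  apply/continuous_in_subspaceT => y; rewrite inE /= in_itv /= => hy.
  exact: continuous_tan (cx0 y hy).
have [c hcx h] := @MVT_segment R tan (fun y => (cos y)^-2) 0 x x0 hd hc.
move: hcx; rewrite in_itv /= => /andP[c0 cx].
move: h; rewrite tan0 subr0 subr0 => h.
have cc : 0 < cos c by apply: cpos; rewrite c0 cx.
have cxp : 0 < cos x by apply: cpos; rewrite x0 lexx.
have hge : x <= tan x.
  rewrite h -[X in X <= _]mul1r ler_wpM2r //.
  rewrite -exprVn; apply: exprn_ege1.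
  by rewrite invf_ge1 // cos_le1.
have -> : sin x = tan x * cos x by rewrite /tan divfK // lt0r_neq0.
by rewrite ler_wpM2r // ltW.
Qed.

Definition csc2 (x : R) := (sin x ^+ 2)^-1.

Lemma pi2_gt0 : 0 < pi / 2 :> R.
Proof. by rewrite divr_gt0 // pi_gt0. Qed.

Lemma csc2_bounds (x : R) : 0 < x < pi / 2 ->
  (x ^+ 2)^-1 <= csc2 x /\ csc2 x - 1 <= (x ^+ 2)^-1.
Proof.
move=> /andP[x0 xp].
have s0 : 0 < sin x by apply: sin_gt0_pihalf; rewrite x0.
have c0 : 0 < cos x.
  apply: cos_gt0_pihalf; rewrite xp andbT.
  by apply: (lt_trans _ x0); rewrite oppr_lt0 pi2_gt0.
have h1 : sin x <= x by apply: sin_le_x; exact: ltW.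
have h2 : x * cos x <= sin x by apply: x_cos_le_sin; rewrite xp ltW.
split.
  rewrite /csc2 lef_pV2 ?posrE ?exprn_gt0 //.
  by apply: lerXn2r => //; rewrite nnegrE ltW.
have -> : csc2 x - 1 = cos x ^+ 2 / sin x ^+ 2.
  rewrite /csc2 cos2sin2; field.
  by rewrite lt0r_neq0.
rewrite ler_pdivrMr ?exprn_gt0 // ler_pdivlMl ?exprn_gt0 //.
by rewrite -exprMn; apply: lerXn2r => //; rewrite nnegrE ?mulr_ge0 ?ltW.
Qed.

Lemma sin_pi2B (t : R) : sin (pi / 2 - t) = cos t.
Proof. by rewrite sinB sin_pihalf cos_pihalf mul1r mul0r subr0. Qed.

Lemma csc2_double (t : R) : sin t != 0 -> cos t != 0 ->
  csc2 (t *+ 2) = (csc2 t + csc2 (pi / 2 - t)) / 4.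
Proof.
move=> s0 c0; rewrite /csc2 sin_pi2B sin_mulr2n.
have := cos2Dsin2 t => e.
have -> : (sin t ^+ 2)^-1 + (cos t ^+ 2)^-1 =
  (cos t ^+ 2 + sin t ^+ 2) / (sin t ^+ 2 * cos t ^+ 2).
  by field; rewrite s0 c0.
rewrite e mulr2n; field.
by rewrite c0 s0 -mulr2n mulrn_eq0 negb_or mulf_neq0.
Qed.

Definition th (N k : nat) : R := (k.*2.+1)%:R * pi / (N * 4)%:R.
Definition SS (N : nat) : R := \sum_(0 <= k < N) csc2 (th N k).

Lemma th_bounds N k : (k < N)%N -> 0 < th N k < pi / 2.
Proof.
move=> kN; have N0 : (0 < N)%N by apply: leq_ltn_trans kN.
rewrite /th; apply/andP; split.
  by rewrite divr_gt0 ?mulr_gt0 ?pi_gt0 // ltr0n muln_gt0 N0.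
rewrite ltr_pdivrMr ?ltr0n ?muln_gt0 ?N0 //.
have ha : (k.*2.+1)%:R < (N%:R * 2 : R) by rewrite -natrM ltr_nat; lia.
have p0 := @pi_gt0 R.
rewrite natrM; nra.
Qed.

Lemma SS_double N : (0 < N)%N -> SS (N.*2) = 4 * SS N.
Proof.
move=> N0; rewrite /SS (big_cat_nat _ (n:=N)) //=; last by lia.
rewrite (big_addn 0 _ N).
have -> : (N.*2 - N = N)%N by lia.
rewrite [X in _ + X]big_nat_rev /= -big_split /= big_distrr /=.
apply: eq_big_nat => k /andP[_ kN].
have h : th N k = th N.*2 k *+ 2.
  rewrite /th -(muln2 N) !natrM mulr2n; field.
  by rewrite pnatr_eq0 -lt0n.
have h2 : th N.*2 (0 + N - k.+1 + N) = pi / 2 - th N.*2 k.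
  rewrite /th.
  have e : ((0 + N - k.+1 + N).*2.+1 = N * 4 - k.*2.+1)%N.
    rewrite add0n -!muln2; lia.
  have le : (k.*2.+1 <= N * 4)%N by rewrite -!muln2; lia.
  rewrite e natrB // -(muln2 N) !natrM; field.
  by rewrite pnatr_eq0 -lt0n.
have kN2 : (k < N.*2)%N by rewrite -muln2; lia.
have /andP[t0 tp] := (th_bounds _ _ kN2).
rewrite h2 h csc2_double.
- by field.
- by apply: lt0r_neq0; rewrite sin_gt0_pihalf // t0.
- apply: lt0r_neq0; rewrite cos_gt0_pihalf // tp andbT.
  by apply: (lt_trans _ t0); rewrite oppr_lt0 pi2_gt0.
Qed.

Lemma SS1 : SS 1 = 2.
Proof.
rewrite /SS big_nat1.
have -> : th 1 0 = pi / 4.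
  by rewrite /th (_ : (0.*2.+1)%:R = 1 :> R) // mul1r mul1n.
have p4 : 0 < pi / 4 :> R by rewrite divr_gt0 ?pi_gt0.
have p4' : pi / 4 < pi / 2 :> R by rewrite ltr_pM2l ?pi_gt0 // ltf_pV2 ?posrE // ltr_nat.
have s0 : sin (pi / 4) != 0 :> R by apply: lt0r_neq0; rewrite sin_gt0_pihalf // p4.
have c0 : cos (pi / 4) != 0 :> R.
  apply: lt0r_neq0; rewrite cos_gt0_pihalf // p4' andbT.
  by apply: (lt_trans _ p4); rewrite oppr_lt0 pi2_gt0.
have := csc2_double _ s0 c0.
have -> : (pi / 4 *+ 2 : R) = pi / 2 by rewrite mulr2n; field.
have -> : (pi / 2 - pi / 4 : R) = pi / 4 by field.
rewrite {1}/csc2 sin_pihalf expr1n invr1 => h.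
lra.
Qed.

Lemma SS_pow n : SS (2 ^ n) = 2 * ((2 ^ n)%:R ^+ 2).
Proof.
elim: n => [|n IH]; first by rewrite expn0 SS1 expr1n mulr1.
rewrite expnS mul2n SS_double ?expn_gt0 // IH -muln2 natrM.
by ring.
Qed.

Definition OS (N : nat) : R := \sum_(0 <= k < N) ((k.*2.+1)%:R ^+ 2)^-1.

Lemma O_bounds n : OS (2 ^ n) <= pi ^+ 2 / 8 /\
  pi ^+ 2 / 8 - pi ^+ 2 / (16 * (2 ^ n)%:R) <= OS (2 ^ n).
Proof.
set N := (2 ^ n)%N.
have N0 : (0 < N)%N by rewrite expn_gt0.
set M : R := N%:R.
have M0 : 0 < M by rewrite ltr0n.
have p0 := @pi_gt0 R.
set c : R := (M * 4) ^+ 2 / pi ^+ 2.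
have key : \sum_(0 <= k < N) (th N k ^+ 2)^-1 = c * OS N.
  rewrite /OS big_distrr /=; apply: eq_big_nat => k _.
  rewrite /th /c /M natrM; move: (@pi R) p0 => p p0.
  have k0 : (k.*2.+1)%:R != 0 :> R by rewrite pnatr_eq0.
  move: k0; move: ((k.*2.+1)%:R : R) => a a0.
  field; rewrite a0 lt0r_neq0 //= pnatr_eq0 -lt0n //.
have up : c * OS N <= SS N.
  rewrite -key /SS; apply: ler_sum_nat => k /andP[_ kN].
  exact: (csc2_bounds _ (th_bounds _ _ kN)).1.
have lo : SS N - M <= c * OS N.
  have -> : M = \sum_(0 <= k < N) (1:R) by rewrite sumr_const_nat subn0.
  rewrite -key /SS -sumrB.
  apply: ler_sum_nat => k /andP[_ kN].
  exact: (csc2_bounds _ (th_bounds _ _ kN)).2.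
rewrite /N SS_pow -/N -/M in up lo.
rewrite /c in up lo; clear key c.
move: (@pi R) p0 up lo => p p0 up lo.
move: (OS N) up lo => o up lo.
have Mn : M != 0 by rewrite lt0r_neq0.
have pn : p != 0 by rewrite lt0r_neq0.
have eO : o = ((M * 4) ^+ 2 / p ^+ 2 * o) * (p ^+ 2 / (16 * M ^+ 2)).
  by field; rewrite Mn pn.
have w0 : 0 <= p ^+ 2 / (16 * M ^+ 2).
  by rewrite divr_ge0 ?exprn_ge0 ?mulr_ge0 ?ltW.
split.
  rewrite eO; apply: le_trans (ler_wpM2r w0 up) _.
  rewrite le_eqVlt; apply/orP; left; apply/eqP; field.
  by rewrite Mn.
rewrite eO; apply: le_trans (ler_wpM2r w0 lo).
rewrite le_eqVlt; apply/orP; left; apply/eqP; field.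
by rewrite Mn.
Qed.

Definition PS (N : nat) : R := \sum_(0 <= k < N) ((k.+1)%:R ^+ 2)^-1.

Lemma PS_double M : PS (M.*2) = OS M + PS M / 4.
Proof.
elim: M => [|M IH]; first by rewrite /PS /OS !big_geq // mul0r addr0.
rewrite doubleS /PS /OS !big_nat_recr //= -/(PS _) -/(OS _) -/(PS _) IH.
have e : ((M.*2.+2)%:R ^+ 2)^-1 = ((M.+1)%:R ^+ 2)^-1 / 4 :> R.
  rewrite -addn2 -muln2 -[M.+1]addn1 !natrD natrM.
  have a0 : (M%:R + 1%:R : R) != 0 by rewrite -natrD pnatr_eq0 addn1.
  have a1 : (M%:R * 2 + 2 : R) != 0.
    by rewrite (_ : M%:R * 2 + 2 = (M%:R + 1) * 2) ?mulf_neq0 //; ring.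
  by field; rewrite a0 a1.
by rewrite e mulrDl; ring.
Qed.

Lemma sum_nat_mono (f : nat -> R) m n : (forall k, 0 <= f k) -> (m <= n)%N ->
  \sum_(0 <= k < m) f k <= \sum_(0 <= k < n) f k.
Proof.
move=> f0 mn; rewrite [X in _ <= X](big_cat_nat _ (n:=m)) //= lerDl.
by apply: sumr_ge0 => i _.
Qed.

Lemma inv_sq_ge0 (a : R) : 0 <= (a ^+ 2)^-1.
Proof. by rewrite invr_ge0 sqr_ge0. Qed.

Lemma OS_le M : OS M <= pi ^+ 2 / 8.
Proof.
apply: le_trans (O_bounds M).1.
apply: sum_nat_mono => [k|]; first exact: inv_sq_ge0.
by apply: ltnW; apply: ltn_expl.
Qed.

Lemma PS_le M : PS M <= pi ^+ 2 / 6.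
Proof.
have m1 : PS M <= PS M.*2.
  by apply: sum_nat_mono => [k|]; [exact: inv_sq_ge0 | rewrite -addnn leq_addr].
have := PS_double M; have := OS_le M => h1 h2.
have : PS M.*2 <= pi ^+ 2 / 8 + PS M.*2 / 4 by rewrite h2; lra.
move: (pi ^+ 2 : R) => p; lra.
Qed.

Lemma PS_lower n : pi ^+ 2 / 6 - pi ^+ 2 / (4 * (2 ^ n)%:R) <= PS (2 ^ n).
Proof.
have p2 : 0 <= pi ^+ 2 :> R by rewrite sqr_ge0.
elim: n => [|n IH].
  rewrite expn0 /PS big_nat1 mulr1 expr1n invr1.
  move: (pi ^+ 2 : R) p2 => p p0; lra.
rewrite expnS mul2n PS_double.
have := (O_bounds n).2.
rewrite -mul2n natrM.
move: IH; set N : R := (2 ^ n)%:R => IH h.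
have N0 : N != 0 by rewrite /N pnatr_eq0 expn_eq0.
set u := pi ^+ 2 / N.
have e1 : pi ^+ 2 / (4 * N) = u / 4 by rewrite /u; field; rewrite N0.
have e2 : pi ^+ 2 / (16 * N) = u / 16 by rewrite /u; field; rewrite N0.
have e3 : pi ^+ 2 / (4 * (2%:R * N)) = u / 8 by rewrite /u; field; rewrite N0.
rewrite e1 in IH; rewrite e2 in h; rewrite e3.
clear e1 e2 e3; move: (pi ^+ 2 : R) u IH h => p u IH h; lra.
Qed.

Lemma cvg_PS : series (fun k => ((k.+1)%:R ^+ 2)^-1 : R) @ \oo --> pi ^+ 2 / 6.
Proof.
apply/cvgrPdist_le => eps e0.
have p2 : 0 < pi ^+ 2 :> R by rewrite exprn_gt0 // pi_gt0.
set n := Num.trunc (pi ^+ 2 / (4 * eps)).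
have hn : pi ^+ 2 / (4 * eps) < (2 ^ n)%:R.
  apply: (lt_le_trans (truncnS_gt _)); rewrite ler_nat; exact: ltn_expl.
exists (2 ^ n)%N => // t /= ht.
have st : series (fun k => ((k.+1)%:R ^+ 2)^-1 : R) t = PS t by [].
rewrite st ger0_norm; last by rewrite subr_ge0 PS_le.
have := PS_lower n.
have : PS (2 ^ n) <= PS t.
  by apply: sum_nat_mono => // k; exact: inv_sq_ge0.
have : pi ^+ 2 / (4 * (2 ^ n)%:R) <= eps.
  rewrite ler_pdivrMr ?mulr_gt0 ?ltr0n ?expn_gt0 //.
  rewrite ltr_pdivrMr ?mulr_gt0 // in hn.
  by rewrite (_ : eps * (4 * _) = (2 ^ n)%:R * (4 * eps)); [exact: ltW | ring].
move=> h1 h2 h3; lra.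
Qed.

Lemma eseries_cvg (u : nat -> R) l : series u @ \oo --> l ->
  (\sum_(0 <= k <oo) (u k)%:E)%E = l%:E.
Proof.
move=> hu.
have -> : (fun n => (\sum_(0 <= k < n) (u k)%:E)%E) = EFin \o series u.
  by apply/funext => n /=; rewrite sumEFin.
rewrite EFin_lim; last by apply/cvg_ex; exists l.
by rewrite (cvg_lim _ hu).
Qed.

Lemma basel12 : series (fun k => ((k.+1)%:R ^+ 2)^-1 / 2 : R) @ \oo --> pi ^+ 2 / 12.
Proof.
have -> : pi ^+ 2 / 12 = (pi ^+ 2 / 6) * 2^-1 :> R by field.
have -> : series (fun k => ((k.+1)%:R ^+ 2)^-1 / 2 : R) =
    (fun n => series (fun k => ((k.+1)%:R ^+ 2)^-1 : R) n * 2^-1).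
  by apply/funext => n; rewrite /series /= big_distrl.
exact: cvgMl cvg_PS.
Qed.

Lemma sum_tail0 (v : nat -> R) M t : (forall k, (M <= k)%N -> v k = 0) -> (M <= t)%N ->
  \sum_(0 <= k < t) v k = \sum_(0 <= k < M) v k.
Proof.
move=> h Mt; rewrite (big_cat_nat _ (n:=M)) //= [X in _ + X]big1_seq ?addr0 //.
by move=> i /andP[_]; rewrite mem_index_iota => /andP[+ _]; exact: h.
Qed.

Lemma cvg_finsupp (v : nat -> R) M : (forall k, (M <= k)%N -> v k = 0) ->
  series v @ \oo --> \sum_(0 <= k < M) v k.
Proof.
move=> h; apply/cvgrPdist_le => e e0; exists M => // t /= ht.
by rewrite /series /= (sum_tail0 _ _ _ h ht) subrr normr0 ltW.
Qed.

Lemma pairing_fin (y x : nat -> R) M : (forall k, (M <= k)%N -> x k = 0) ->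
  pairing y x = \sum_(0 <= k < M) y k * x k.
Proof.
move=> h; rewrite /pairing; apply: cvg_lim => //; apply: cvg_finsupp.
by move=> k /h ->; rewrite mulr0.
Qed.

Definition gk (k : nat) : R := ((k.+1)%:R ^+ 2)^-1.
Definition bk (k : nat) : R := gk k / 2.
Definition ak (x : nat -> R) (k : nat) : R :=
  ((k.+1)%:R ^+ 2) / 2 * (x k - ((k.+1)%:R ^+ 2)^-1) ^+ 2.

Lemma ak0 (x : nat -> R) k : x k = 0 -> ak x k = bk k.
Proof.
move=> hx; rewrite /ak /bk /gk hx sub0r sqrrN.
have n0 : ((k.+1)%:R : R) != 0 by rewrite pnatr_eq0.
by field.
Qed.

Lemma fobj_fin (x : nat -> R) M : (forall k, (M <= k)%N -> x k = 0) ->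
  fobj x = (pi ^+ 2 / 12 + \sum_(0 <= k < M) (ak x k - bk k))%:E.
Proof.
move=> h; rewrite /fobj; apply: eseries_cvg.
have -> : series (ak x) = (fun n => series bk n + series (fun k => ak x k - bk k) n).
  by apply/funext => n; rewrite /series /= -big_split /=; apply: eq_bigr => k _; ring.
apply: cvgD; first exact: basel12.
by apply: cvg_finsupp => k /h /ak0 ->; rewrite subrr.
Qed.

Lemma cc0 : @cc R (fun _ => 0).
Proof. by exists 0%N. Qed.

Lemma gind0 : gind (fun _ : nat => 0 : R) = 0%E.
Proof. by rewrite /gind asboolT. Qed.

Lemma gindN (x : nat -> R) : x <> (fun _ => 0) -> gind x = (+oo)%E.
Proof. by move=> h; rewrite /gind asboolF. Qed.

Lemma pairing0 (y : nat -> R) : pairing y (fun _ => 0) = 0.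
Proof. by rewrite (@pairing_fin y _ 0%N) // big_geq. Qed.

Lemma gind_conj (y : nat -> R) : fconj (@gind R) y = 0%E.
Proof.
rewrite /fconj; apply/eqP; rewrite eq_le; apply/andP; split.
  apply: ge_ereal_sup => z [x _ <-].
  case: (pselect (x = fun _ => 0)) => [->|nx].
    by rewrite gind0 pairing0 sube0.
  by rewrite gindN //= leNye.
apply: le_ereal_sup_tmp; exists 0%E => //.
exists (fun _ => 0); first exact: cc0.
by rewrite gind0 pairing0 sube0.
Qed.

Lemma fobj0 : fobj (fun _ : nat => (0 : R)) = (pi ^+ 2 / 12 : R)%:E.
Proof. by rewrite (@fobj_fin _ 0%N) // big_geq // addr0. Qed.

Lemma primal : ereal_inf [set (fobj x + gind x)%E | x in @cc R] = (pi ^+ 2 / 12 : R)%:E.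
Proof.
apply/eqP; rewrite eq_le; apply/andP; split.
  apply: ge_ereal_inf; exists (fobj (fun _ => 0%R : R) + gind (fun _ => 0%R : R))%E.
    by exists (fun _ => 0) => //; exact: cc0.
  by rewrite fobj0 gind0 adde0.
apply: le_ereal_inf_tmp => z [x [M hM] <-].
case: (pselect (x = fun _ => 0)) => [->|nx].
  by rewrite fobj0 gind0 adde0.
by rewrite gindN // (fobj_fin _ _ hM) /= leey.
Qed.

Definition xt (y : nat -> R) (N : nat) (k : nat) : R :=
  if (k < N)%N then (1 + y k) * gk k else 0.

Lemma conj_lower (y : nat -> R) N :
  (((\sum_(0 <= k < N) (1 + y k) ^+ 2 * bk k) - pi ^+ 2 / 12)%:E <= fconj (@fobj R) y)%E.
Proof.
have hx : forall k, (N <= k)%N -> xt y N k = 0.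
  by move=> k hk; rewrite /xt ltnNge hk.
apply: le_ereal_sup_tmp; exists ((pairing y (xt y N))%:E - fobj (xt y N))%E.
  by exists (xt y N) => //; exists N.
rewrite (pairing_fin _ _ _ hx) (fobj_fin _ _ hx) -EFinB lee_fin.
have e : \sum_(0 <= k < N) y k * xt y N k - \sum_(0 <= k < N) (ak (xt y N) k - bk k)
    = \sum_(0 <= k < N) (1 + y k) ^+ 2 * bk k.
  rewrite -sumrB; apply: eq_big_nat => k /andP[_ kN].
  rewrite /ak /bk /xt /gk kN.
  have n0 : ((k.+1)%:R : R) != 0 by rewrite pnatr_eq0.
  by field.
rewrite -e; lra.
Qed.

Lemma dual_le (y : nat -> R) N :
  (- fconj (@fobj R) y <= (pi ^+ 2 / 12 - \sum_(0 <= k < N) (1 + y k) ^+ 2 * bk k)%:E)%E.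
Proof.
by rewrite leeNl -EFinN opprB; exact: conj_lower.
Qed.

Definition yN (N : nat) (k : nat) : R := if (k < N)%N then -1 else 0.

Lemma term_le (N k : nat) (x : R) :
  yN N k * x - (ak (fun _ => x) k - bk k) <= (if (k < N)%N then 0 else bk k).
Proof.
rewrite /yN /ak /bk /gk.
have n0 : ((k.+1)%:R : R) != 0 by rewrite pnatr_eq0.
have n2 : 0 < ((k.+1)%:R : R) ^+ 2 by rewrite exprn_gt0 // ltr0n.
case: ifP => _.
  have -> : -1 * x - ((k.+1)%:R ^+ 2 / 2 * (x - ((k.+1)%:R ^+ 2)^-1) ^+ 2 -
      ((k.+1)%:R ^+ 2)^-1 / 2) = - ((k.+1)%:R ^+ 2 * x ^+ 2 / 2) by field.
  by rewrite oppr_le0 divr_ge0 // mulr_ge0 // ?sqr_ge0 // ltW.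
rewrite mul0r sub0r opprB lerBlDr lerDl.
by rewrite mulr_ge0 ?sqr_ge0 // divr_ge0 // ltW.
Qed.

Lemma bk_sum_le M : \sum_(0 <= k < M) bk k <= pi ^+ 2 / 12.
Proof.
rewrite /bk -big_distrl /=.
have := PS_le M; rewrite /PS /gk => h.
have -> : (pi ^+ 2 / 12 : R) = pi ^+ 2 / 6 / 2 by field.
by rewrite ler_pM2r // invr_gt0.
Qed.

Lemma conj_upper N : (fconj (@fobj R) (yN N) <= (- \sum_(0 <= k < N) bk k)%:E)%E.
Proof.
apply: ge_ereal_sup => z [x [M hM] <-].
set M' := maxn M N.
have hM' : forall k, (M' <= k)%N -> x k = 0.
  by move=> k hk; apply: hM; apply: leq_trans hk; exact: leq_maxl.
rewrite (pairing_fin _ _ _ hM') (fobj_fin _ _ hM') -EFinB lee_fin.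
have h1 : \sum_(0 <= k < M') yN N k * x k - \sum_(0 <= k < M') (ak x k - bk k)
    <= \sum_(0 <= k < M') (if (k < N)%N then 0 else bk k).
  rewrite -sumrB; apply: ler_sum_nat => k _; exact: (term_le N k (x k)).
have NM : (N <= M')%N by exact: leq_maxr.
have h2 : \sum_(0 <= k < M') (if (k < N)%N then 0 else bk k) =
    \sum_(0 <= k < M') bk k - \sum_(0 <= k < N) bk k.
  rewrite (big_cat_nat _ (n:=N)) //= [X in _ = X - _](big_cat_nat _ (n:=N)) //=.
  rewrite big1_seq; last first.
    by move=> i /andP[_]; rewrite mem_index_iota => /andP[_ ->].
  rewrite add0r addrAC subrr add0r; apply: eq_big_seq => i.
  by rewrite mem_index_iota => /andP[+ _]; rewrite leqNgt => /negbTE ->.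
have := bk_sum_le M'.
move: h1; rewrite h2; lra.
Qed.

Lemma yN_l2 N : @l2 R (yN N).
Proof.
rewrite /l2 /=.
rewrite (@eseries_cvg (fun k => yN N k ^+ 2) (\sum_(0 <= k < N) yN N k ^+ 2)).
  exact: ltry.
apply: cvg_finsupp => k hk.
by rewrite /yN ltnNge hk expr0n.
Qed.

Lemma dual_yN N : ((\sum_(0 <= k < N) bk k)%:E <= - fconj (@fobj R) (yN N))%E.
Proof. by rewrite leeNr -EFinN; exact: conj_upper. Qed.

Lemma dual_sup :
  ereal_sup [set (- fconj (@fobj R) y)%E | y in @l2 R] = (pi ^+ 2 / 12 : R)%:E.
Proof.
apply/eqP; rewrite eq_le; apply/andP; split.
  apply: ge_ereal_sup => z [y _ <-].
  by apply: le_trans (dual_le y 0%N) _; rewrite big_geq // subr0.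
set s := ereal_sup _.
have hB N : ((\sum_(0 <= k < N) bk k)%:E <= s)%E.
  apply: le_ereal_sup_tmp; exists (- fconj (@fobj R) (yN N))%E.
    by exists (yN N) => //; exact: yN_l2.
  exact: dual_yN.
case E: s => [r| |]; last 2 first.
- exact: leey.
- by have := hB 0%N; rewrite E big_geq.
rewrite lee_fin.
rewrite -(cvg_lim _ basel12) //.
apply: limr_le; first by apply/cvg_ex; exists (pi ^+ 2 / 12); exact: basel12.
by exists 0%N => // N _ /=; rewrite -lee_fin -E; exact: hB.
Qed.

Lemma not_l2_const : ~ @l2 R (fun _ => -1).
Proof.
rewrite /l2 /= => h.
set S := (\sum_(0 <= k <oo) _)%E in h.
have hn n : ((n%:R : R)%:E <= S)%E.
  apply: le_trans (@nneseries_lim_ge R (fun k => ((-1 : R) ^+ 2)%:E) xpredT 0%N n _); last first.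
    by move=> k _ _; rewrite lee_fin sqr_ge0.
  by rewrite sumEFin sumr_const_nat subn0 sqrrN expr1n.
move: h hn; case: S => [r _ hn| //| _ hn]; last by have := hn 0%N.
have := hn (Num.trunc r).+1; rewrite lee_fin => h1.
by have := truncnS_gt r; rewrite ltNge h1.
Qed.

Lemma bk_gt0 k : 0 < bk k.
Proof. by rewrite /bk /gk divr_gt0 // invr_gt0 exprn_gt0 // ltr0n. Qed.

Lemma no_attain (y : nat -> R) : @l2 R y ->
  (- fconj (@fobj R) y - fconj (@gind R) (fun k => (- y k)%R))%E <> (pi ^+ 2 / 12 : R)%:E.
Proof.
move=> hy; rewrite gind_conj sube0 => he.
have hQ N : \sum_(0 <= k < N) (1 + y k) ^+ 2 * bk k <= 0.
  by have := dual_le y N; rewrite he lee_fin; lra.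
have yk k : y k = -1.
  have := hQ k.+1; rewrite big_nat_recr //=.
  have q0 : 0 <= \sum_(0 <= i < k) (1 + y i) ^+ 2 * bk i.
    by apply: sumr_ge0 => i _; rewrite mulr_ge0 ?sqr_ge0 // ltW // bk_gt0.
  have t0 : 0 <= (1 + y k) ^+ 2 * bk k by rewrite mulr_ge0 ?sqr_ge0 // ltW // bk_gt0.
  move=> h.
  have : (1 + y k) ^+ 2 * bk k = 0 by lra.
  move/eqP; rewrite mulf_eq0 (gt_eqF (bk_gt0 k)) orbF sqrf_eq0 => /eqP; lra.
apply: not_l2_const.
by have -> : (fun _ : nat => -1 : R) = y by apply/funext => k; rewrite yk.
Qed.
End Trig.

Theorem mainTheorem6 (R : realType) :
  (* g^* = 0 on l^2 *)
  (forall y : nat -> R, l2 y -> fconj (@gind R) y = 0%E) /\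
  (* primal value is f(0) = pi^2/12 *)
  fobj (fun _ : nat => 0 : R) = (pi ^+ 2 / 12 : R)%:E /\
  ereal_inf [set (fobj x + gind x)%E | x in @cc R] = (pi ^+ 2 / 12 : R)%:E /\
  (* dual value is pi^2/12 (no duality gap) *)
  ereal_sup [set (- fconj (@fobj R) y - fconj (@gind R) (fun k => (- y k)%R))%E
            | y in @l2 R] = (pi ^+ 2 / 12 : R)%:E /\
  ereal_sup [set (- fconj (@fobj R) y)%E | y in @l2 R] = (pi ^+ 2 / 12 : R)%:E /\
  (* the dual supremum is not attained *)
  ~ (exists y : nat -> R, l2 y /\
       (- fconj (@fobj R) y - fconj (@gind R) (fun k => (- y k)%R))%E
         = (pi ^+ 2 / 12 : R)%:E).
Proof.
split; first by move=> y _; exact: gind_conj.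
split; first exact: fobj0.
split; first exact: primal.
split.
  rewrite -dual_sup; congr ereal_sup; apply: eq_imagel => y _.
  by rewrite gind_conj sube0.
split; first exact: dual_sup.
by move=> [y [hy he]]; exact: (no_attain y hy he).
Qed.
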